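(* Let $V$ be a real vector space of dimension $m\ge3$ with a non-degenerate symmetric inner product of arbitrary signature, and let $R$ be an algebraic curvature tensor on $V$. The following are equivalent: (1) $R$ is $1$ Osserman; (2) for every $x\in\mathcal{N}$, every $y\in V_{\mathbb{C}}$, and every $k\ge1$, $\operatorname{trace}\{\mathcal{J}_R(x+ty)^k\}=O(t^k)$ as $t\downarrow0$.
   Context: An algebraic curvature tensor is $R\in\otimes^4V^*$ with $R(x,y,z,w)=R(z,w,x,y)=-R(y,x,z,w)$ and $R(x,y,z,w)+R(y,z,x,w)+R(z,x,y,w)=0$. The Jacobi operator is defined by $(\mathcal{J}_R(x)y,w)=R(y,x,x,w)$. $R$ is $1$ Osserman if the eigenvalues of $\mathcal{J}_R(x)$ are constant on each of the pseudo-spheres $\{x\in V:(x,x)=1\}$ and $\{x\in V:(x,x)=-1\}$ (equivalently, for each $k$ there is a constant $c_k$ with $\operatorname{trace}\{\mathcal{J}_R(x)^k\}=c_k(x,x)^k$ for all $x\in V$). Everything is extended complex-multilinearly to $V_{\mathbb{C}}=V\otimes\mathbb{C}$; $\mathcal{N}=\{v\in V_{\mathbb{C}}:(v,v)=0\}$. *)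

(* Defs.v *)
From HB Require Import structures.
From mathcomp Require Import all_boot all_order all_algebra.
From mathcomp Require Import reals complex.
Set Implicit Arguments. Unset Strict Implicit. Unset Printing Implicit Defensive.
Import Order.TTheory GRing.Theory Num.Theory.
Local Open Scope ring_scope.

(* V = 'rV[F]_m (row vectors in a fixed basis).  A 4-tensor on V is given by
   its components in that basis; the associated multilinear form is
   T(x,y,z,w) = \sum_{i,j,k,l} T i j k l x_i y_j z_k w_l. *)
Definition tensor4 (F : Type) (m : nat) := 'I_m -> 'I_m -> 'I_m -> 'I_m -> F.

Definition tensor_eval (F : comRingType) (m : nat) (T : tensor4 F m)
  (x y z w : 'rV[F]_m) : F :=
  \sum_(i < m) \sum_(j < m) \sum_(k < m) \sum_(l < m)
     T i j k l * x 0 i * y 0 j * z 0 k * w 0 l.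

Definition ip (F : comRingType) (m : nat) (G : 'M[F]_m) (x y : 'rV[F]_m) : F :=
  (x *m G *m y^T) 0 0.

Definition nondeg_sym_form (F : comUnitRingType) (m : nat) (G : 'M[F]_m) : Prop :=
  G^T = G /\ G \in unitmx.

Definition is_act (F : comRingType) (m : nat) (T : tensor4 F m) : Prop :=
  forall x y z w : 'rV[F]_m,
    tensor_eval T x y z w = tensor_eval T z w x y /\
    tensor_eval T x y z w = - tensor_eval T y x z w /\
    tensor_eval T x y z w + tensor_eval T y z x w + tensor_eval T z x y w = 0.

(* Jacobi operator J_T(x), acting on row vectors by y |-> y *m J_T(x);
   it is the unique matrix with (J_T(x) y, w) = T(y,x,x,w) for all y, w
   (when G is invertible):  J = M G^{-1} with M_{il} = T(e_i,x,x,e_l). *)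
Definition jacobi_op (F : fieldType) (m : nat) (G : 'M[F]_m) (T : tensor4 F m)
  (x : 'rV[F]_m) : 'M[F]_m :=
  (\matrix_(i < m, l < m) tensor_eval T (delta_mx 0 i) x x (delta_mx 0 l))
    *m invmx G.

(* 1-Osserman (trace characterization given in the paper's definition). *)
Definition osserman1 (F : fieldType) (m : nat) (G : 'M[F]_m) (T : tensor4 F m) : Prop :=
  exists c : nat -> F, forall (k : nat) (x : 'rV[F]_m),
    \tr (jacobi_op G T x ^+ k) = c k * (ip G x x) ^+ k.

Definition cplx (R : rcfType) (r : R) : R[i] := Complex r 0.
Definition cplx_mx (R : rcfType) (m n : nat) (A : 'M[R]_(m, n)) : 'M[R[i]]_(m, n) :=
  map_mx (@cplx R) A.
Definition cplx_tensor (R : rcfType) (m : nat) (T : tensor4 R m) : tensor4 R[i] m :=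
  fun i j k l => cplx (T i j k l).

Definition bigO_pow_at0plus (R : rcfType) (f : R -> R[i]) (k : nat) : Prop :=
  exists (C delta : R), 0 < delta /\
    forall t : R, 0 < t -> t < delta -> `|f t| <= cplx (C * t ^+ k).

(* Main.v *)
Require Import Defs.
From HB Require Import structures.
From mathcomp Require Import all_boot all_order all_algebra.
From mathcomp Require Import reals complex.
From mathcomp Require Import ring lra zify.
From Stdlib Require Import Classical.
Import Order.TTheory GRing.Theory Num.Theory.
Set Implicit Arguments. Unset Strict Implicit. Unset Printing Implicit Defensive.
Local Open Scope ring_scope.

Lemma te_morph (F1 F2 : comNzRingType) (f : {rmorphism F1 -> F2}) m
  (T1 : tensor4 F1 m) (T2 : tensor4 F2 m) :
  (forall i j k l, f (T1 i j k l) = T2 i j k l) ->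
  forall x y z w, f (tensor_eval T1 x y z w) =
     tensor_eval T2 (map_mx f x) (map_mx f y) (map_mx f z) (map_mx f w).
Proof.
move=> HT x y z w; rewrite /tensor_eval rmorph_sum; apply: eq_bigr => i _.
rewrite rmorph_sum; apply: eq_bigr => j _.
rewrite rmorph_sum; apply: eq_bigr => k _.
rewrite rmorph_sum; apply: eq_bigr => l _.
by rewrite !rmorphM !mxE HT.
Qed.

Section Generic.
Variable (F : fieldType) (m : nat) (G : 'M[F]_m) (T : tensor4 F m).

Lemma te_scale23 (x y z w : 'rV[F]_m) (s : F) :
  tensor_eval T x (s *: y) (s *: z) w = s ^+ 2 * tensor_eval T x y z w.
Proof.
rewrite /tensor_eval mulr_sumr; apply: eq_bigr => i _.
rewrite mulr_sumr; apply: eq_bigr => j _.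
rewrite mulr_sumr; apply: eq_bigr => k _.
rewrite mulr_sumr; apply: eq_bigr => l _.
rewrite !mxE; ring.
Qed.

Lemma jacobiZ (x : 'rV[F]_m) (s : F) :
  jacobi_op G T (s *: x) = s ^+ 2 *: jacobi_op G T x.
Proof.
rewrite /jacobi_op scalemxAl; congr (_ *m _).
by apply/matrixP => i j; rewrite !mxE te_scale23.
Qed.

Lemma mxexprZ k (a : F) (A : 'M[F]_m) : (a *: A) ^+ k = a ^+ k *: A ^+ k.
Proof.
elim: k => [|k IH]; first by rewrite !expr0 scale1r.
by rewrite !exprS IH -!mulmxE -scalemxAl -scalemxAr scalerA.
Qed.

Definition PP k x := \tr (jacobi_op G T x ^+ k).
Definition QQ x := ip G x x.

Lemma PPZ k x s : PP k (s *: x) = s ^+ (2 * k) * PP k x.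
Proof. by rewrite /PP jacobiZ mxexprZ mxtraceZ exprM. Qed.

Lemma ip_sum x y : ip G x y = \sum_i \sum_j x 0 i * G i j * y 0 j.
Proof.
rewrite /ip mxE [RHS]exchange_big; apply: eq_bigr => j _.
by rewrite !mxE mulr_suml.
Qed.

Lemma ipDl (a b : F) x y z : ip G (a *: x + b *: y) z = a * ip G x z + b * ip G y z.
Proof. by rewrite /ip mulmxDl mulmxDl -!scalemxAl !mxE. Qed.

Lemma ipDr (a b : F) x y z : ip G z (a *: x + b *: y) = a * ip G z x + b * ip G z y.
Proof. by rewrite /ip linearD /= !linearZ /= mulmxDr -!scalemxAr !mxE. Qed.

Lemma ipC x y : G^T = G -> ip G x y = ip G y x.
Proof.
move=> GT; rewrite !ip_sum [RHS]exchange_big; apply: eq_bigr => i _.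
apply: eq_bigr => j _.
have -> : G j i = G i j by rewrite -[in LHS]GT mxE.
ring.
Qed.
Lemma QQ_comb (a b : F) x y : G^T = G ->
  QQ (a *: x + b *: y) = a ^+ 2 * QQ x + 2 * a * b * ip G x y + b ^+ 2 * QQ y.
Proof. by move=> GT; rewrite /QQ ipDl !ipDr (ipC y x GT); ring. Qed.

Definition linp (a b : 'rV[F]_m) : 'rV[{poly F}]_m :=
  map_mx polyC a + 'X *: map_mx polyC b.
Definition Tp : tensor4 {poly F} m := fun i j k l => (T i j k l)%:P.
Definition Mp (a b : 'rV[F]_m) : 'M[{poly F}]_m :=
  \matrix_(i < m, l < m) tensor_eval Tp (map_mx polyC (delta_mx 0 i))
       (linp a b) (linp a b) (map_mx polyC (delta_mx 0 l)).
Definition Jp a b := Mp a b *m map_mx polyC (invmx G).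
Definition Pp k a b := \tr (Jp a b ^+ k).

Lemma map_polyC_horner n1 n2 (A : 'M[F]_(n1, n2)) s :
  map_mx (horner_eval s) (map_mx polyC A) = A.
Proof. by apply/matrixP => i j; rewrite !mxE /horner_eval hornerC. Qed.

Lemma Pp_eval k a b s : (Pp k a b).[s] = PP k (a + s *: b).
Proof.
rewrite /Pp /PP -[_.[s]]/(horner_eval s _) -trace_map_mx rmorphXn.
congr (\tr (_ ^+ _)).
rewrite /Jp /jacobi_op -[LHS]/(map_mx (horner_eval s) _) map_mxM map_polyC_horner; congr (_ *m _).
apply/matrixP => i l; rewrite !mxE.
rewrite (@te_morph _ _ (horner_eval s) _ _ T); last first.
  by move=> ? ? ? ?; rewrite /Tp /horner_eval; exact: hornerC.
have E : map_mx (horner_eval s) (linp a b) = a + s *: b.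
  apply/matrixP => p q; rewrite !mxE /horner_eval.
  by rewrite hornerD hornerC hornerM hornerX hornerC.
rewrite E; congr tensor_eval; exact: map_polyC_horner.
Qed.
End Generic.

Section Transfer.
Variables (F1 F2 : fieldType) (f : {rmorphism F1 -> F2}) (m : nat).
Variables (G : 'M[F1]_m) (T : tensor4 F1 m).
Definition Tf : tensor4 F2 m := fun i j k l => f (T i j k l).

Lemma map_jacobi x :
  map_mx f (jacobi_op G T x) = jacobi_op (map_mx f G) Tf (map_mx f x).
Proof.
rewrite /jacobi_op map_mxM map_invmx; congr (_ *m _).
apply/matrixP => i l; rewrite !mxE (@te_morph _ _ f _ _ Tf) //.
by rewrite !map_delta_mx.
Qed.

Lemma map_PP k x : f (PP G T k x) = PP (map_mx f G) Tf k (map_mx f x).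
Proof. rewrite /PP -trace_map_mx rmorphXn; congr (\tr (_ ^+ _)); exact: map_jacobi. Qed.

Lemma map_ip x y : f (ip G x y) = ip (map_mx f G) (map_mx f x) (map_mx f y).
Proof. rewrite /ip map_trmx -!map_mxM. rewrite [RHS]mxE. reflexivity. Qed.
End Transfer.

Local Open Scope complex_scope.

Section Cplx.
Variable R : realType.
Local Notation C := R[i].

Lemma small_real (a k e : R) : 0 < e -> 0 <= k ->
  (forall t, 0 < t -> t < e -> a <= k * t) -> a <= 0.
Proof.
move=> e0 k0 H; rewrite leNgt; apply/negP => a0.
pose u := a / (2 * (k + 1)).
have u0 : 0 < u by rewrite /u divr_gt0 // mulr_gt0 // ltr_pwDr.
have ku : (k + 1) * u = a / 2.
  have k1 : k + 1 != 0 by rewrite gt_eqF // ltr_pwDr.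
  by rewrite /u; field.
pose t := Num.min (e / 2) u.
have t0 : 0 < t by rewrite /t lt_min u0 divr_gt0.
have te : t < e by rewrite /t gt_min; apply/orP; left; rewrite ltr_pdivrMr // ltr_pMr // ltr1n.
have tu : t <= u by rewrite /t ge_min lexx orbT.
have := H t t0 te.
nra.
Qed.

Lemma ge0_real (z : C) : 0 <= z -> z = (complex.Re z)%:C.
Proof. by move=> z0; rewrite [LHS]complexE (ger0_Im z0) mulr0 addr0. Qed.


Lemma cplxE (r : R) : cplx r = r%:C. Proof. by []. Qed.

Lemma coef_small (p : {poly C}) k :
  bigO_pow_at0plus (fun t => p.[cplx t]) k -> forall j, (j < k)%N -> p`_j = 0.
Proof.
move=> [Cb [d [d0 Hb]]] j; elim/ltn_ind: j => j IH jk.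
have [jn|jn] := leqP (size p) j; first by rewrite nth_default.
pose M : C := \sum_(i < size p) `|p`_i|.
pose K : C := (`|Cb|)%:C + M.
have M0 : 0 <= M by apply: sumr_ge0 => i _.
have K0 : 0 <= K by rewrite addr_ge0 // ler0c.
have key : forall t : R, 0 < t -> t < Num.min d 1 -> `|p`_j| <= K * t%:C.
  move=> t t0; rewrite lt_min => /andP[td t1].
  pose tau : C := t%:C.
  have tau0 : 0 < tau by rewrite ltcR.
  have tau1 : tau <= 1 by rewrite lecR ltW.
  have Hp : `|p.[tau]| <= (`|Cb|)%:C * tau ^+ j.+1.
    apply: le_trans (Hb t t0 td) _.
    have -> : (`|Cb|)%:C * tau ^+ j.+1 = (`|Cb| * t ^+ j.+1)%:C by rewrite rmorphM rmorphXn.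
    rewrite cplxE lecR.
    apply: le_trans (ler_wpM2r (exprn_ge0 _ (ltW t0)) (ler_norm Cb)) _.
    apply: ler_wpM2l => //; exact: (ler_wiXn2l (ltW t0) (ltW t1) jk).
  pose jo : 'I_(size p) := Ordinal jn.
  have E : p.[tau] = p`_j * tau ^+ j + \sum_(i < size p | i != jo) p`_i * tau ^+ i.
    by rewrite horner_coef (bigD1 jo).
  pose S := \sum_(i < size p | i != jo) p`_i * tau ^+ i.
  have HS : `|S| <= M * tau ^+ j.+1.
    apply: le_trans (ler_norm_sum _ _ _) _.
    apply: (@le_trans _ _ (\sum_(i < size p | i != jo) `|p`_i| * tau ^+ j.+1)).
      apply: ler_sum => i ij; rewrite normrM normrX (gtr0_norm tau0).
      have [ilt|ige] := ltnP i j.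
        have -> : p`_i = 0 by apply: IH => //; exact: ltn_trans ilt jk.
        by rewrite normr0 !mul0r.
      apply: ler_wpM2l => //; apply: (ler_wiXn2l (ltW tau0) tau1).
      by rewrite ltn_neqAle ige andbT; apply: contra ij => /eqP e; apply/eqP/val_inj.
    rewrite -mulr_suml; apply: ler_wpM2r; first by rewrite exprn_ge0 ?ltW.
    by rewrite /M [X in _ <= X](bigD1 jo) //= lerDr.
  have H1 : `|p`_j| * tau ^+ j <= K * tau * tau ^+ j.
    have -> : `|p`_j| * tau ^+ j = `|p.[tau] - S| by rewrite E /S addrK normrM normrX (gtr0_norm tau0).
    apply: le_trans (ler_normB _ _) _.
    rewrite -mulrA -exprS /K mulrDl.
    exact: lerD.
  by rewrite -(ler_pM2r (exprn_gt0 j tau0)).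
have a0 := normr_ge0 p`_j.
have Ea := ge0_real a0.
have Ek := ge0_real K0.
have Hd : 0 < Num.min d 1 by rewrite lt_min d0 ltr01.
have Hk : 0 <= complex.Re K by move: K0; rewrite {1}Ek ler0c.
have Hkey : forall t, 0 < t -> t < Num.min d 1 -> complex.Re `|p`_j| <= complex.Re K * t.
  move=> t t0 t1; rewrite -lecR -Ea. have -> : (complex.Re K * t)%:C = K * t%:C by rewrite [in RHS]Ek rmorphM. exact: key.
move: (small_real Hd Hk Hkey).
move=> H; apply/eqP; rewrite -normr_eq0 Ea.
apply/eqP; congr (_%:C); apply/eqP; rewrite eq_le H /=.
by rewrite -ler0c -Ea.
Qed.

Lemma poly_eq0_nat (p : {poly C}) : (forall n : nat, p.[n.+1%:R] = 0) -> p = 0.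
Proof.
move=> H; apply/eqP; apply/negPn/negP => pn0.
pose rs : seq C := [seq i.+1%:R | i <- iota 0 (size p)].
have Hr : all (root p) rs by apply/allP => x /mapP [i _ ->]; rewrite /root H.
have Hu : uniq rs.
  rewrite map_inj_uniq ?iota_uniq // => a b /eqP; rewrite eqr_nat eqSS => /eqP.
  by [].
by have := max_poly_roots pn0 Hr Hu; rewrite size_map size_iota ltnn.
Qed.

Lemma poly_eq_nz (p q : {poly C}) : (forall t : C, t != 0 -> p.[t] = q.[t]) -> p = q.
Proof.
move=> H; apply/eqP; rewrite -subr_eq0; apply/eqP; apply: poly_eq0_nat => n.
by rewrite hornerD hornerN H ?subrr // pnatr_eq0.
Qed.

Lemma poly_eq_all (p q : {poly C}) : (forall t : C, p.[t] = q.[t]) -> p = q.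
Proof. by move=> H; apply: poly_eq_nz => t _. Qed.

Section Plane.
Variables (m : nat) (G : 'M[C]_m) (T : tensor4 C m).
Hypothesis GT : G^T = G.
Hypothesis H2 : forall (x y : 'rV[C]_m), QQ G x = 0 -> forall k : nat, (1 <= k)%N ->
  bigO_pow_at0plus (fun t : R => PP G T k (x + cplx t *: y)) k.

Lemma low_coef x y k : QQ G x = 0 -> (1 <= k)%N -> forall j, (j < k)%N -> (Pp G T k x y)`_j = 0.
Proof.
move=> Hx hk; apply: coef_small.
have [Cb [d [d0 Hb]]] := H2 y Hx hk.
exists Cb, d; split=> // t t0 td; rewrite Pp_eval; exact: Hb.
Qed.


Lemma plane u v k : QQ G u = 0 -> QQ G v = 0 -> (1 <= k)%N ->
  forall a b, PP G T k (a *: u + b *: v) = (Pp G T k u v)`_k * (a * b) ^+ k.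
Proof.
move=> Hu Hv hk.
have hf := low_coef v Hu hk; have hg := low_coef u Hv hk.
have Pf := Pp_eval G T k u v; have Pg := Pp_eval G T k v u.
move: hf hg Pf Pg; move Ef: (Pp G T k u v) => f; move Eg: (Pp G T k v u) => g.
move=> hf hg Pf Pg.
move En: (size f) => n.
have Eq : 'X^n * g = \sum_(j < n) f`_j *: 'X^(2 * k + n - j).
  apply: poly_eq_nz => t t0.
  rewrite hornerM hornerXn horner_sum.
  have -> : g.[t] = t ^+ (2 * k) * f.[t^-1].
    rewrite Pg Pf.
    have -> : v + t *: u = t *: (u + t^-1 *: v).
      by rewrite scalerDr scalerA mulfV // scale1r addrC.
    by rewrite PPZ.
  rewrite horner_coef En !mulr_sumr; apply: eq_bigr => j _.
  rewrite hornerZ hornerXn.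
  have jle : (j <= 2 * k + n)%N by have := ltn_ord j; lia.
  have E1 : t ^+ (2 * k + n - j) = t ^+ (2 * k) * t ^+ n / t ^+ j.
    by rewrite -exprD -{2}(subnK jle) exprD mulfK // expf_neq0.
  rewrite E1 exprVn; ring.
have fz : forall j, (k < j)%N -> f`_j = 0.
  move=> j kj; have [jn|jn] := ltnP j n; last by rewrite nth_default // En.
  have := congr1 (fun p : {poly C} => p`_(2 * k + n - j)) Eq => /=.
  rewrite coefXnM coef_sum (bigD1 (Ordinal jn)) //= big1 => [|j' /eqP nj]; last first.
    rewrite coefZ coefXn.
    have -> : (2 * k + n - j == 2 * k + n - j')%N = false.
      apply/eqP => e; apply: nj; apply: val_inj => /=.
      have := ltn_ord j'; lia.
    by rewrite mulr0.
  rewrite coefZ coefXn eqxx mulr1 addr0.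
  case: ifP => _; first by move=> <-.
  move=> <-.
  apply: hg; lia.
have hf_eval : forall s, f.[s] = f`_k * s ^+ k.
  move=> s; have kN : (k < maxn n k.+1)%N by rewrite leq_max leqnn orbT.
  have sz : (size f <= maxn n k.+1)%N by rewrite En leq_maxl.
  rewrite (horner_coef_wide s sz) (bigD1 (Ordinal kN)) //= big1 ?addr0 //.
  move=> i /eqP ik.
  have [ilt|igt|ieq] := ltngtP i k.
  - by rewrite hf // mul0r.
  - by rewrite fz // mul0r.
  - by exfalso; apply: ik; apply: val_inj.
move=> a b; have [->|a0] := eqVneq a 0.
  rewrite scale0r add0r PPZ mul0r expr0n.
  have -> : PP G T k v = 0.
    by rewrite -[v]addr0 -(scale0r u) -Pg horner_coef0 hg.
  by rewrite mulr0 (gtn_eqF hk) mulr0.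
have -> : a *: u + b *: v = a *: (u + (b / a) *: v).
  by rewrite scalerDr scalerA mulrC divfK.
rewrite PPZ -Pf hf_eval exprM mulrCA -exprMn.
congr (_ * _ ^+ k); field.
exact: a0.
Qed.


Lemma QQ_null_comb u v a b : QQ G u = 0 -> QQ G v = 0 ->
  QQ G (a *: u + b *: v) = 2 * a * b * ip G u v.
Proof. by move=> Hu Hv; rewrite QQ_comb // Hu Hv; ring. Qed.

Lemma plane_cmp u v k a0 b0 a1 b1 : QQ G u = 0 -> QQ G v = 0 -> (1 <= k)%N ->
  PP G T k (a1 *: u + b1 *: v) * QQ G (a0 *: u + b0 *: v) ^+ k =
  PP G T k (a0 *: u + b0 *: v) * QQ G (a1 *: u + b1 *: v) ^+ k.
Proof.
move=> Hu Hv hk; rewrite (plane Hu Hv hk a1 b1) (plane Hu Hv hk a0 b0).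
rewrite (QQ_null_comb a0 b0 Hu Hv) (QQ_null_comb a1 b1 Hu Hv).
move: ((Pp G T k u v)`_k) (ip G u v) => F I.
rewrite !exprMn; ring.
Qed.

Lemma cmp_x0 x0 z k : QQ G x0 != 0 -> QQ G x0 * QQ G z - ip G x0 z ^+ 2 != 0 ->
  (1 <= k)%N -> PP G T k z * QQ G x0 ^+ k = PP G T k x0 * QQ G z ^+ k.
Proof.
move=> Q0n Dn hk.
move EQ0: (QQ G x0) Q0n Dn => Q0 Q0n Dn.
move EB: (ip G x0 z) Dn => B Dn.
move EQz: (QQ G z) Dn => Qz Dn.
pose d := sqrtc (B ^+ 2 - Q0 * Qz).
have d2 : d ^+ 2 = B ^+ 2 - Q0 * Qz by rewrite sqr_sqrtc.
have d0 : d != 0.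
  apply: contra Dn => /eqP d0; move: d2; rewrite d0 expr0n /= => /eqP.
  by rewrite eq_sym subr_eq0 => /eqP ->; rewrite subrr.
pose al := (d - B) / Q0.
pose u := al *: x0 + 1 *: z.
pose c := Q0 / (2 * d).
pose v := 1 *: x0 + (- c) *: u.
have Hu : QQ G u = 0.
  rewrite /u QQ_comb // EQ0 EB EQz.
  have -> : al ^+ 2 * Q0 + 2 * al * 1 * B + 1 ^+ 2 * Qz =
            (d ^+ 2 - (B ^+ 2 - Q0 * Qz)) / Q0 by rewrite /al; field.
  by rewrite d2 subrr mul0r.
have ipu : ip G x0 u = d.
  rewrite /u ipDr EB -/(QQ G x0) EQ0 /al; field.
  exact: Q0n.
have Hv : QQ G v = 0.
  rewrite /v QQ_comb // EQ0 ipu Hu /c; field.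
  exact: d0.
have Ex0 : x0 = c *: u + 1 *: v.
  by apply/rowP => i; rewrite /v !mxE; ring.
have Ez : z = (1 - al * c) *: u + (- al) *: v.
  by apply/rowP => i; rewrite /v /u !mxE; ring.
have := plane_cmp c 1 (1 - al * c) (- al) Hu Hv hk.
by rewrite -Ex0 -Ez EQ0 EQz.
Qed.


Lemma all_z x0 w k : QQ G x0 != 0 -> QQ G x0 * QQ G w - ip G x0 w ^+ 2 != 0 ->
  (1 <= k)%N -> forall z, PP G T k z * QQ G x0 ^+ k = PP G T k x0 * QQ G z ^+ k.
Proof.
move=> Q0n Dw hk z.
have PpE := Pp_eval G T k z w; move: (Pp G T k z w) PpE => P PpE.
pose qz : {poly C} := (QQ G z)%:P + (2 * ip G z w)%:P * 'X + (QQ G w)%:P * ('X * 'X).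
have qzE : forall s, qz.[s] = QQ G (z + s *: w).
  move=> s; rewrite -{1}[z]scale1r QQ_comb // /qz !(hornerD, hornerCM, hornerMX, hornerX, hornerC); ring.
pose dp : {poly C} := (QQ G x0)%:P * qz - ((ip G x0 z)%:P + (ip G x0 w)%:P * 'X) ^+ 2.
have dpN : dp = (QQ G x0 * QQ G z - ip G x0 z ^+ 2)%:P
   + (QQ G x0 * (2 * ip G z w) - 2 * ip G x0 z * ip G x0 w)%:P * 'X
   + (QQ G x0 * QQ G w - ip G x0 w ^+ 2)%:P * 'X^2.
  rewrite /dp /qz !(polyCD, polyCB, polyCM, polyCN, polyC_exp).
  move: (QQ G x0) (QQ G z) (QQ G w) (ip G x0 z) (ip G x0 w) (ip G z w) => a b c e f g.
  ring.
clearbody qz dp.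
have dpE : forall s, dp.[s] = QQ G x0 * QQ G (z + s *: w) - ip G x0 (z + s *: w) ^+ 2.
  move=> s; have -> : z + s *: w = 1 *: z + s *: w by rewrite scale1r.
  rewrite QQ_comb // ipDr dpN.
  rewrite !(hornerD, hornerCM, hornerC, hornerX, hornerXn).
  move: (QQ G x0) (QQ G z) (QQ G w) (ip G x0 z) (ip G x0 w) (ip G z w) => a b c e f g.
  ring.
have dp2 : dp`_2 = QQ G x0 * QQ G w - ip G x0 w ^+ 2.
  by rewrite dpN !coefD !coefCM coefC coefX coefXn /= mulr0 mulr1 !add0r.
have dp0 : dp != 0 by apply: contra Dw => /eqP e; rewrite -dp2 e coef0.
pose hp : {poly C} := P * (QQ G x0 ^+ k)%:P - (PP G T k x0)%:P * qz ^+ k.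
have hpE : forall s, hp.[s] = PP G T k (z + s *: w) * QQ G x0 ^+ k - PP G T k x0 * QQ G (z + s *: w) ^+ k.
  by move=> s; rewrite /hp hornerD hornerN !hornerM !hornerC horner_exp PpE qzE.
clearbody hp.
have hd : hp * dp = 0.
  apply: poly_eq_all => t; rewrite hornerM horner0.
  have [e|ne] := eqVneq dp.[t] 0; first by rewrite e mulr0.
  have Dn : QQ G x0 * QQ G (z + t *: w) - ip G x0 (z + t *: w) ^+ 2 != 0 by rewrite -dpE.
  have E := cmp_x0 Q0n Dn hk.
  rewrite hpE; apply/eqP; rewrite mulf_eq0; apply/orP; left.
  by rewrite subr_eq0; apply/eqP; exact: E.
have : hp = 0 by move/eqP: hd; rewrite mulf_eq0 (negbTE dp0) orbF => /eqP.
move/(congr1 (fun p : {poly C} => p.[0])); rewrite hpE horner0 scale0r addr0.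
by move/eqP; rewrite subr_eq0 => /eqP.
Qed.

End Plane.
End Cplx.


Section Real.
Variables (R : realType) (m : nat) (G : 'M[R]_m) (T : tensor4 R m).
Local Notation C := R[i].
Local Notation GC := (cplx_mx G).
Local Notation TC := (cplx_tensor T).

Lemma cplx_PP k x : PP GC TC k (cplx_mx x) = cplx (PP G T k x).
Proof. symmetry; exact: (map_PP (real_complex R) G T k x). Qed.

Lemma cplx_ip (S : 'M[R]_m) x y : ip (cplx_mx S) (cplx_mx x) (cplx_mx y) = cplx (ip S x y).
Proof. symmetry; exact: (map_ip (real_complex R) S x y). Qed.

Lemma ip_delta (S : 'M[R]_m) i j : ip S (delta_mx 0 i) (delta_mx 0 j) = S i j.
Proof. by rewrite /ip -rowE trmx_delta -colE !mxE. Qed.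

Lemma sym0 (S : 'M[R]_m) : S^T = S -> (forall x, ip S x x = 0) -> S = 0.
Proof.
move=> ST H; apply/matrixP => i j; rewrite mxE.
have := H (1 *: delta_mx 0 i + 1 *: delta_mx 0 j).
rewrite -/(QQ S _) (QQ_comb (G := S)) // /QQ !H ip_delta => /eqP.
rewrite !mulr0 add0r addr0 !mulr1 mulf_eq0 pnatr_eq0 /=.
by move/eqP.
Qed.


Lemma exists_x0 : G^T = G -> G \in unitmx -> (0 < m)%N -> exists x0, QQ G x0 != 0.
Proof.
move=> GT Gu m0; case: (classic (exists x0, QQ G x0 != 0)) => // H; exfalso.
have H0 : forall x, ip G x x = 0.
  move=> x; apply/eqP; apply/negPn/negP => Hx; apply: H; exists x; exact: Hx.
have := mxrank_unit Gu; rewrite (sym0 GT H0) mxrank0 => e.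
by move: m0; rewrite -e.
Qed.

Lemma exists_w x0 : G^T = G -> G \in unitmx -> (2 <= m)%N -> QQ G x0 != 0 ->
  exists w, QQ G x0 * QQ G w - ip G x0 w ^+ 2 != 0.
Proof.
move=> GT Gu m2 Q0n.
pose g := x0 *m G.
pose D := QQ G x0 *: G - g^T *m g.
have DT : D^T = D by rewrite /D linearB /= linearZ /= trmx_mul trmxK GT.
have ipD : forall w, ip D w w = QQ G x0 * QQ G w - ip G x0 w ^+ 2.
  move=> w.
  have E1 : ip D w w = QQ G x0 * ip G w w - ip (g^T *m g) w w.
    by rewrite /ip /D mulmxBr mulmxBl -scalemxAr -scalemxAl !mxE.
  rewrite E1; congr (_ - _).
  have E3 : w *m (g^T *m g) *m w^T = (w *m g^T) *m (g *m w^T) by rewrite !mulmxA.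
  rewrite /ip E3 [LHS]mxE big_ord1 expr2.
  have E2 : (w *m g^T) 0 0 = (g *m w^T) 0 0.
    by rewrite -[w]trmxK -trmx_mul trmxK mxE.
  by rewrite E2 /g.
case: (classic (exists w, QQ G x0 * QQ G w - ip G x0 w ^+ 2 != 0)) => // H; exfalso.
have H0 : forall w, ip D w w = 0.
  move=> w; rewrite ipD; apply/eqP; apply/negPn/negP => Hw; apply: H; exists w; exact: Hw.
have D0 := sym0 DT H0.
have : \rank (QQ G x0 *: G) = m by rewrite mxrank_scale_nz // mxrank_unit.
have -> : QQ G x0 *: G = g^T *m g by apply/eqP; rewrite -subr_eq0 -/D D0.
move=> e; have := mulmx_max_rank g^T g; rewrite e => m1.
by move: (leq_trans m2 m1).
Qed.


Lemma GCT : G^T = G -> GC^T = GC.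
Proof. by move=> GT; rewrite /cplx_mx map_trmx GT. Qed.

Lemma hall (c : R) k : G^T = G -> (forall x, PP G T k x = c * QQ G x ^+ k) ->
  forall z : 'rV[C]_m, PP GC TC k z = cplx c * QQ GC z ^+ k.
Proof.
move=> GT Hc z; have GCt := GCT GT.
pose a := map_mx (@complex.Re R) z; pose b := map_mx (@complex.Im R) z.
have Ez : z = cplx_mx a + 'i *: cplx_mx b.
  by apply/rowP => j; rewrite !mxE; exact: complexE.
move EA: (cplx_mx a) Ez => A Ez; move EB: (cplx_mx b) Ez => B Ez.
have PpE := Pp_eval GC TC k A B; move: (Pp GC TC k A B) PpE => P PpE.
pose q : {poly C} := (QQ GC A)%:P + (2 * ip GC A B)%:P * 'X + (QQ GC B)%:P * ('X * 'X).
have qE : forall s, q.[s] = QQ GC (A + s *: B).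
  move=> s; have -> : A + s *: B = 1 *: A + s *: B by rewrite scale1r.
  rewrite QQ_comb // /q !(hornerD, hornerCM, hornerMX, hornerX, hornerC); ring.
have PE : P = (cplx c)%:P * q ^+ k.
  apply/eqP; rewrite -subr_eq0; apply/eqP; apply: poly_eq0_nat => n.
  rewrite hornerD hornerN hornerM hornerC horner_exp PpE qE.
  have -> : A + n.+1%:R *: B = cplx_mx (a + n.+1%:R *: b).
    apply/rowP => j; rewrite -EA -EB !mxE !cplxE rmorphD rmorphM rmorph_nat.
    by [].
  rewrite cplx_PP Hc /QQ cplx_ip.
  by rewrite !cplxE rmorphM rmorphXn subrr.
rewrite Ez -PpE PE hornerM hornerC horner_exp qE.
by [].
Qed.


Lemma bound_of (c : R) k x y : G^T = G ->
  (forall z, PP GC TC k z = cplx c * QQ GC z ^+ k) -> QQ GC x = 0 ->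
  bigO_pow_at0plus (fun t => PP GC TC k (x + cplx t *: y)) k.
Proof.
move=> GT Hall Hx; have GCt := GCT GT.
pose K : C := `|cplx c| * (2 * `|ip GC x y| + `|QQ GC y|) ^+ k.
have K0 : 0 <= K by rewrite mulr_ge0 // exprn_ge0 // addr_ge0 // mulr_ge0 // ler0n.
exists (complex.Re K), 1; split; first exact: ltr01.
move=> t t0 t1.
have t0' : 0 <= cplx t by rewrite cplxE ler0c ltW.
have t1' : cplx t <= 1 by rewrite cplxE lecR ltW.
have EQ : QQ GC (x + cplx t *: y) = cplx t * (2 * ip GC x y + cplx t * QQ GC y).
  have -> : x + cplx t *: y = 1 *: x + cplx t *: y by rewrite scale1r.
  rewrite QQ_comb // Hx; ring.
have -> : cplx (complex.Re K * t ^+ k) = K * cplx t ^+ k.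
  by rewrite [in RHS](ge0_real K0) !cplxE rmorphM rmorphXn.
rewrite Hall EQ exprMn !normrM !normrX (ger0_norm t0') /K -mulrA.
apply: ler_wpM2l; first exact: normr_ge0.
rewrite mulrC; apply: ler_wpM2r; first exact: exprn_ge0.
apply: lerXn2r; rewrite ?nnegrE ?addr_ge0 ?mulr_ge0 ?ler0n //.
apply: le_trans (ler_normD _ _) _.
have e1 : `|2 * ip GC x y| = 2 * `|ip GC x y| by rewrite normrM normr_nat.
have e2 : `|cplx t * QQ GC y| <= `|QQ GC y|.
  by rewrite normrM (ger0_norm t0') -[X in _ <= X]mul1r ler_wpM2r.
by apply: lerD; [rewrite e1 | exact: e2].
Qed.

End Real.

Unset Implicit Arguments.
Local Close Scope complex_scope.

Theorem lemma2p2 (R : realType) (m : nat) (G : 'M[R]_m) (T : tensor4 R m) :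
  (3 <= m)%N -> nondeg_sym_form G -> is_act T ->
  (osserman1 G T <->
   forall (x y : 'rV[R[i]]_m),
     ip (cplx_mx G) x x = 0 ->
     forall k : nat, (1 <= k)%N ->
       bigO_pow_at0plus
         (fun t : R => \tr (jacobi_op (cplx_mx G) (cplx_tensor T)
                                       (x + cplx t *: y) ^+ k)) k).
Proof.
move=> m3 [GT Gu] _; split.
  move=> [c Hc] x y Hx k hk.
  apply: (bound_of (c := c k)) => //.
  apply: hall => // x'; exact: Hc.
move=> H2.
have [x0 Q0n] := exists_x0 GT Gu (leq_trans (isT : (0 < 3)%N) m3).
have [w Dw] := exists_w GT Gu (leq_trans (isT : (2 <= 3)%N) m3) Q0n.
exists (fun k => if k is 0 then m%:R else PP G T k x0 / QQ G x0 ^+ k) => k x.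
case: k => [|k].
  by rewrite !GRing.expr0 mulr1 mxtrace1.
have GCt := GCT GT.
have Q0c : QQ (cplx_mx G) (cplx_mx x0) != 0.
  rewrite /QQ cplx_ip; apply: contra Q0n => /eqP e; apply/eqP; apply: (@complexI R).
  by rewrite rmorph0 -cplxE.
have Dwc : QQ (cplx_mx G) (cplx_mx x0) * QQ (cplx_mx G) (cplx_mx w)
           - ip (cplx_mx G) (cplx_mx x0) (cplx_mx w) ^+ 2 != 0.
  rewrite /QQ !cplx_ip !cplxE -rmorphXn -rmorphM -rmorphB.
  apply: contra Dw => /eqP e; apply/eqP; apply: (@complexI R).
  by rewrite rmorph0.
have := all_z GCt H2 Q0c Dwc (isT : (1 <= k.+1)%N) (cplx_mx x).
rewrite !cplx_PP /QQ !cplx_ip !cplxE -!rmorphXn -!rmorphM => /complexI E.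
have Q0k : ip G x0 x0 ^+ k.+1 != 0 by rewrite expf_neq0.
apply: (mulIf Q0k); rewrite E; field; exact: Q0k.
Qed.
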